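(* Let $n\ge 2$. Suppose $\{a_i\}_{i=1}^k$ is a tight frame set for $\mathcal{H}_n$ and $b\ge 0$. Let $m=\max_{i=2,\dots,k}a_i^2$. Then $\{b,a_2,\dots,a_k\}$ is a tight frame set for $\mathcal{H}_n$ if and only if $$b^2\in\Big[\,nm-\sum_{i=2}^k a_i^2,\ \frac{1}{n-1}\sum_{i=2}^k a_i^2\,\Big].$$
   Context: $\mathcal{H}_n$ is an $n$-dimensional real or complex Hilbert space. A sequence of nonnegative numbers $\{a_i\}_{i=1}^k$ is a tight frame set for $\mathcal{H}_n$ if there exists a tight frame $\{f_i\}_{i=1}^k$ for $\mathcal{H}_n$ (i.e. vectors with $\sum_i|\langle f,f_i\rangle|^2=\lambda\|f\|^2$ for all $f$, for some $\lambda>0$) with $\|f_i\|=a_i$ for all $i$. *)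

(* Defs.v *)
From HB Require Import structures.
From mathcomp Require Import all_boot all_order all_algebra.
From mathcomp Require Import reals.
From mathcomp Require Import complex.
Set Implicit Arguments. Unset Strict Implicit. Unset Printing Implicit Defensive.
Import Order.TTheory GRing.Theory Num.Theory.
Local Open Scope ring_scope.

(* The n-dimensional Hilbert space H_n is modelled inside C^n = 'cV[R[i]]_n
   (R : realType, R[i] the complex numbers over R) with the standard inner
   product <x,y> = \sum_j x_j * conj(y_j).  The real Hilbert space R^n is the
   subset of vectors with all coordinates real (flag [real] = true), on which
   this inner product restricts to the usual real one. *)

Definition sqmod (R : realType) (z : R[i]) : R := (@complex.Re R z) ^+ 2 + (@complex.Im R z) ^+ 2.

Definition cdot (R : realType) (n : nat) (x y : 'cV[R[i]]_n) : R[i] :=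
  \sum_(j < n) x j 0 * conjc (y j 0).

Definition vnorm (R : realType) (n : nat) (x : 'cV[R[i]]_n) : R :=
  Num.sqrt (\sum_(j < n) sqmod (x j 0)).

Definition in_Hn (R : realType) (real : bool) (n : nat) (x : 'cV[R[i]]_n) : Prop :=
  real -> forall j, @complex.Im R (x j 0) = 0.

Definition tight_frame (R : realType) (real : bool) (n k : nat)
    (f : 'I_k -> 'cV[R[i]]_n) : Prop :=
  (forall i, in_Hn real (f i)) /\
  exists lam : R, 0 < lam /\
    forall x : 'cV[R[i]]_n, in_Hn real x ->
      \sum_(i < k) sqmod (cdot x (f i)) = lam * vnorm x ^+ 2.

Definition tight_frame_set (R : realType) (real : bool) (n k : nat)
    (a : 'I_k -> R) : Prop :=
  (forall i, 0 <= a i) /\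
  exists f : 'I_k -> 'cV[R[i]]_n, tight_frame real f /\ forall i, vnorm (f i) = a i.

Definition cons_seq (R : Type) (k : nat) (c : R) (a : 'I_k -> R) : 'I_k.+1 -> R :=
  fun i => if unlift ord0 i is Some j then a j else c.

(* Main.v *)
Require Import Defs.
From HB Require Import structures.
From mathcomp Require Import all_boot all_order all_algebra.
From mathcomp Require Import reals.
From mathcomp Require Import complex.
From mathcomp Require Import ring lra.
Import Order.TTheory GRing.Theory Num.Theory.
Local Open Scope ring_scope.
Set Implicit Arguments. Unset Strict Implicit. Unset Printing Implicit Defensive.
Section CL.
Variable R : realType.

Definition sqn n (v : 'cV[R]_n) : R := \sum_j v j 0 ^+ 2.

Definition good n (lam : R) (G : seq (R * 'cV[R]_n)) : Prop :=
  (forall p, p \in G -> sqn p.2 = p.1) /\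
  (forall i j, \sum_(p <- G) p.2 i 0 * p.2 j 0 = lam * (i == j)%:R).
Arguments good : clear implicits.

Lemma sqn_ge0 n (v : 'cV[R]_n) : 0 <= sqn v.
Proof. by apply: sumr_ge0 => j _; rewrite sqr_ge0. Qed.

Lemma sqn_eq0 n (v : 'cV[R]_n) : sqn v = 0 -> forall j, v j 0 = 0.
Proof.
move=> h j; apply/eqP; rewrite -sqrf_eq0; apply/eqP.
by apply: (psumr_eq0P _ h) => // i _; rewrite sqr_ge0.
Qed.

Lemma sqnZ n c (v : 'cV[R]_n) : sqn (c *: v) = c ^+ 2 * sqn v.
Proof. rewrite /sqn mulr_sumr; apply: eq_bigr => j _; rewrite mxE; lra. Qed.

Lemma zero_sol n lam (s : seq R) : (forall w, w \in s -> w = 0) -> (n = 0%N \/ lam = 0) ->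
  exists G, map fst G = s /\ good n lam G.
Proof.
move=> hs hn; exists (map (fun w => (w, (0 : 'cV[R]_n))) s); split.
  by rewrite -map_comp map_id_in.
split.
  move=> p /mapP [w ws ->] /=; rewrite (hs w ws) /sqn big1 // => j _; rewrite mxE; lra.
move=> i j; case: hn => [hn|->]; last first.
  by rewrite mul0r big_map big1 // => w _; rewrite mxE mul0r.
by subst n; case: i.
Qed.

Lemma sum_nonneg_zero (s : seq R) : (forall w, w \in s -> 0 <= w) -> \sum_(w <- s) w = 0 ->
  forall w, w \in s -> w = 0.
Proof.
elim: s => [|x s IH] // hs; rewrite big_cons => h w; rewrite in_cons => /orP [/eqP ->|ws].
  have h1 : 0 <= x by apply: hs; rewrite mem_head.
  have h2 : 0 <= \sum_(w <- s) w by rewrite big_seq; apply: sumr_ge0 => w' w's; apply: hs; rewrite in_cons w's orbT.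
  lra.
apply: IH => //.
  by move=> w' w's; apply: hs; rewrite in_cons w's orbT.
have h1 : 0 <= x by apply: hs; rewrite mem_head.
have h2 : 0 <= \sum_(w <- s) w by rewrite big_seq; apply: sumr_ge0 => w' w's; apply: hs; rewrite in_cons w's orbT.
lra.
Qed.

Lemma tetris_facts (lam x y : R) : 0 < lam -> 0 <= x <= lam -> 0 <= y <= lam -> lam < x + y ->
 let p := lam * (lam - y) / (2*lam - x - y) in
 [/\ 0 <= p, 0 <= x - p, 0 <= lam - p, 0 <= y - lam + p & p * (x - p) = (lam - p) * (y - lam + p)].
Proof.
move=> hl /andP[hx0 hx1] /andP[hy0 hy1] hxy p.
have [hD|hD] := eqVneq (2*lam - x - y) 0.
  have ex : x = lam by lra.
  have ey : y = lam by lra.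
  have -> : p = 0 by rewrite /p hD invr0 mulr0.
  split; try lra; rewrite ey; ring.
have hDp : 0 < 2*lam - x - y by rewrite lt_neqAle eq_sym hD /=; lra.
have hpD : p * (2*lam - x - y) = lam * (lam - y) by rewrite /p divfK.
have hp0 : 0 <= p by rewrite /p divr_ge0 ?(ltW hDp) // mulr_ge0 //; lra.
have hpx : p <= x.
  rewrite -(ler_pM2r hDp) hpD; nra.
have hpy : lam - y <= p.
  rewrite -(ler_pM2r hDp) hpD; nra.
split; try lra.
Qed.

Definition ext n (a : R) (v : 'cV[R]_n) : 'cV[R]_n.+1 :=
  \col_i (if unlift ord0 i is Some j then v j 0 else a).

Lemma ext0 n a (v : 'cV[R]_n) : ext a v ord0 0 = a.
Proof. by rewrite mxE unlift_none. Qed.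

Lemma extS n a (v : 'cV[R]_n) j : ext a v (lift ord0 j) 0 = v j 0.
Proof. by rewrite mxE liftK. Qed.

Lemma sqn_ext n a (v : 'cV[R]_n) : sqn (ext a v) = a ^+ 2 + sqn v.
Proof.
rewrite /sqn big_ord_recl ext0; congr (_ + _); apply: eq_bigr => j _.
by rewrite extS.
Qed.

Lemma divmul (x y : R) : 0 <= x -> 0 <= y -> x / (x + y) * (x + y) = x.
Proof.
move=> hx hy; have [h0|h0] := eqVneq (x + y) 0.
  have -> : x = 0 by lra.
  by rewrite !mul0r.
by rewrite divfK.
Qed.

End CL.
Arguments good {R} n lam G.
Arguments sqn {R n} v.
Section CL2.
Variable R : realType.

Lemma zero_cases (s : seq R) n (lam : R) :
  (forall w, w \in s -> 0 <= w <= lam) -> \sum_(w <- s) w = n%:R * lam ->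
  (lam = 0 \/ n = 0%N) ->
  exists G : seq (R * 'cV[R]_n), map fst G = s /\ good n lam G.
Proof.
move=> hs hsum [hl|hn].
  apply: zero_sol; last by right.
  by move=> w /hs; rewrite hl => /andP[h1 h2]; lra.
apply: zero_sol; last by left.
apply: sum_nonneg_zero; first by move=> w /hs /andP[].
by rewrite hsum hn mul0r.
Qed.

Lemma CL N : forall (s : seq R) n (lam : R), size s = N -> 0 <= lam ->
  (forall w, w \in s -> 0 <= w <= lam) -> \sum_(w <- s) w = n%:R * lam ->
  exists G : seq (R * 'cV[R]_n), map fst G = s /\ good n lam G.
Proof.
elim: N => [|N IH] s n lam hN hl hs hsum.
  apply: zero_cases => //; case: s hN hs hsum => // _ _; rewrite big_nil => /esym/eqP.
  by rewrite mulf_eq0 pnatr_eq0 => /orP[/eqP->|/eqP->]; [right|left].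
have [hl0|hl0] := eqVneq lam 0; first by apply: zero_cases => //; left.
case: n hsum => [|n'] hsum; first by apply: zero_cases => //; right.
have hlp : 0 < lam by rewrite lt_neqAle eq_sym hl0.
case: s hN hs hsum => [//|x [|y s']] hN hs hsum.
-
  rewrite big_seq1 in hsum.
  have /andP[hx0 hx1] := hs x (mem_head _ _).
  case: n' hsum => [|n''] hsum; last first.
    have h2 : 2%:R <= (n''.+2)%:R :> R by rewrite ler_nat.
    have : 2%:R * lam <= (n''.+2)%:R * lam by rewrite ler_pM2r.
    lra.
  exists [:: (x, const_mx (Num.sqrt x))]; split => //; split.
    move=> p; rewrite mem_seq1 => /eqP -> /=.
    by rewrite /sqn big_ord1 mxE sqr_sqrtr.
  move=> i j; rewrite big_seq1 /= !mxE -expr2 sqr_sqrtr // hsum.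
  by rewrite (ord1 i) (ord1 j) eqxx mulr1 mul1r.
- rewrite !big_cons in hsum.
  have /andP[hx0 hx1] := hs x (mem_head _ _).
  have /andP[hy0 hy1] : 0 <= y <= lam by apply: hs; rewrite !in_cons eqxx orbT.
  have hs' : forall w, w \in s' -> 0 <= w <= lam.
    by move=> w ws; apply: hs; rewrite !in_cons ws !orbT.
  have [hxy|hxy] := lerP (x + y) lam.
  +
    have [G' [hm hg]] : exists G' : seq (R * 'cV[R]_n'.+1), map fst G' = (x + y) :: s' /\ good n'.+1 lam G'.
      apply: IH => //; first by case: hN.
        move=> w; rewrite in_cons => /orP[/eqP->|/hs' //]; lra.
      by rewrite big_cons -hsum addrA.
    case: G' hm hg => [//|[z g] G''] [ez hm] [hg1 hg2].
    have hsg : sqn g = x + y by rewrite -ez (hg1 (z, g) (mem_head _ _)).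
    exists [:: (x, Num.sqrt (x / (x + y)) *: g), (y, Num.sqrt (y / (x + y)) *: g) & G''].
    split; first by rewrite /= hm.
    split.
      move=> q; rewrite !in_cons => /orP[/eqP->|/orP[/eqP->|hq]] /=.
      * rewrite sqnZ sqr_sqrtr ?divr_ge0 ?addr_ge0 // hsg divmul //.
      * rewrite sqnZ sqr_sqrtr ?divr_ge0 ?addr_ge0 // hsg addrC divmul //.
      * by apply: hg1; rewrite in_cons hq orbT.
    move=> i j; have := hg2 i j; rewrite !big_cons /= !mxE => <-.
    have key : Num.sqrt (x / (x + y)) ^+ 2 * (g i 0 * g j 0) + Num.sqrt (y / (x + y)) ^+ 2 * (g i 0 * g j 0) = g i 0 * g j 0.
      have [h0|h0] := eqVneq (x + y) 0.
        by rewrite (sqn_eq0 (etrans hsg h0)) !mul0r !mulr0 addr0.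
      rewrite !sqr_sqrtr ?divr_ge0 ?addr_ge0 // -mulrDl -mulrDl divff //.
      by rewrite mul1r.
    rewrite -[in RHS]key; ring.
  + (* tetris *)
    set mu := x + y - lam.
    have hmu : 0 < mu by rewrite /mu; lra.
    have [G' [hm hg]] : exists G' : seq (R * 'cV[R]_n'), map fst G' = mu :: s' /\ good n' lam G'.
      apply: IH => //; first by case: hN.
        move=> w; rewrite in_cons => /orP[/eqP->|/hs' //]; rewrite /mu; lra.
      rewrite big_cons /mu; move: hsum; rewrite -addn1 natrD mulrDl mul1r; lra.
    case: G' hm hg => [//|[z g] G''] [ez hm] [hg1 hg2].
    have hsg : sqn g = mu by rewrite -ez (hg1 (z, g) (mem_head _ _)).
    have [] := tetris_facts hlp (introT andP (conj hx0 hx1)) (introT andP (conj hy0 hy1)) hxy.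
    set p := lam * (lam - y) / (2 * lam - x - y) => hp0 hp1 hp2 hp3 hprod.
    set cx := Num.sqrt (x - p) / Num.sqrt mu.
    set cy := - (Num.sqrt (y - lam + p) / Num.sqrt mu).
    have hsmu : Num.sqrt mu != 0 by rewrite sqrtr_eq0 -ltNge.
    have hcx : cx ^+ 2 = (x - p) / mu by rewrite /cx expr_div_n !sqr_sqrtr // ltW.
    have hcy : cy ^+ 2 = (y - lam + p) / mu by rewrite /cy sqrrN expr_div_n !sqr_sqrtr // ltW.
    have hss : Num.sqrt p * Num.sqrt (x - p) = Num.sqrt (lam - p) * Num.sqrt (y - lam + p).
      by rewrite -!sqrtrM // hprod.
    exists [:: (x, ext (Num.sqrt p) (cx *: g)), (y, ext (Num.sqrt (lam - p)) (cy *: g))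
             & map (fun q => (q.1, ext 0 q.2)) G''].
    split; first by rewrite /= -map_comp -hm.
    split.
      move=> q; rewrite !in_cons => /orP[/eqP->|/orP[/eqP->|hq]] /=.
      * rewrite sqn_ext sqnZ sqr_sqrtr // hcx hsg divfK ?gt_eqF //; lra.
      * rewrite sqn_ext sqnZ sqr_sqrtr // hcy hsg divfK ?gt_eqF //; rewrite /mu; lra.
      * move: hq => /mapP [q' hq' ->] /=; rewrite sqn_ext expr0n /= add0r.
        by apply: hg1; rewrite in_cons hq' orbT.
    move=> i j; rewrite !big_cons big_map /=.
    case: (unliftP ord0 i) => [i'|] ->; case: (unliftP ord0 j) => [j'|] ->.
    * rewrite !extS !mxE (inj_eq (@lift_inj _ ord0)) -(hg2 i' j') big_cons /=.
      under eq_bigr do rewrite !extS.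
      transitivity ((cx ^+ 2 + cy ^+ 2) * (g i' 0 * g j' 0) + \sum_(i <- G'') i.2 i' 0 * i.2 j' 0); first by ring.
      rewrite hcx hcy -mulrDl.
      have -> : x - p + (y - lam + p) = mu by rewrite /mu; ring.
      by rewrite divff ?gt_eqF ?mul1r.
    * rewrite !extS !ext0 !mxE eq_sym (negbTE (neq_lift _ _)) mulr0.
      rewrite big1 => [|q _]; last by rewrite ext0 mulr0.
      transitivity ((Num.sqrt p * Num.sqrt (x - p) - Num.sqrt (lam - p) * Num.sqrt (y - lam + p)) * (g i' 0 / Num.sqrt mu)).
        by rewrite /cx /cy; ring.
      by rewrite hss subrr mul0r.
    * rewrite !extS !ext0 !mxE (negbTE (neq_lift _ _)) mulr0.
      rewrite big1 => [|q _]; last by rewrite ext0 mul0r.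
      transitivity ((Num.sqrt p * Num.sqrt (x - p) - Num.sqrt (lam - p) * Num.sqrt (y - lam + p)) * (g j' 0 / Num.sqrt mu)).
        by rewrite /cx /cy; ring.
      by rewrite hss subrr mul0r.
    * rewrite !ext0 eqxx mulr1 big1 => [|q _]; last by rewrite ext0 mulr0.
      rewrite -!expr2 !sqr_sqrtr //; ring.
Qed.
End CL2.
Local Open Scope complex_scope.
Section C.
Variable R : realType.
Implicit Types (z w : R[i]) (r : R).

Lemma ReD z w : complex.Re (z + w) = complex.Re z + complex.Re w. Proof. by case: z; case: w. Qed.
Lemma ImD z w : complex.Im (z + w) = complex.Im z + complex.Im w. Proof. by case: z; case: w. Qed.
Lemma Re_sum n (F : 'I_n -> R[i]) : complex.Re (\sum_j F j) = \sum_j complex.Re (F j).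
Proof. by apply: (big_morph _ ReD). Qed.
Lemma Im_sum n (F : 'I_n -> R[i]) : complex.Im (\sum_j F j) = \sum_j complex.Im (F j).
Proof. by apply: (big_morph _ ImD). Qed.
Lemma ReMr z r : complex.Re (z * r%:C) = complex.Re z * r.
Proof. case: z => a b /=; ring. Qed.
Lemma ImMr z r : complex.Im (z * r%:C) = complex.Im z * r.
Proof. case: z => a b /=; ring. Qed.
Lemma sqmod_ge0 z : 0 <= sqmod z. Proof. by rewrite /sqmod addr_ge0 ?sqr_ge0. Qed.
Lemma sqmod_conj z : sqmod (conjc z) = sqmod z. Proof. by case: z => a b; rewrite /sqmod /= sqrrN. Qed.
Lemma mul_conj z : z * conjc z = (sqmod z)%:C.
Proof. case: z => a b; rewrite /sqmod /=; congr Complex; ring. Qed.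
Lemma sqmodC r : sqmod r%:C = r ^+ 2. Proof. by rewrite /sqmod /= expr0n /= addr0. Qed.
End C.
Section NL.
Variable R : realType.

Lemma vnorm_sq n (x : 'cV[R[i]]_n) : vnorm x ^+ 2 = \sum_j sqmod (x j 0).
Proof. by rewrite /vnorm sqr_sqrtr // sumr_ge0 // => j _; apply: sqmod_ge0. Qed.

Lemma NL (real : bool) n K (c : 'I_K -> R) : (0 < n)%N -> tight_frame_set real n c ->
  0 < \sum_i c i ^+ 2 /\ forall i, n%:R * c i ^+ 2 <= \sum_i c i ^+ 2.
Proof.
move=> hn [hc [f [[hin [lam [hl hid]]] hnorm]]].
have hcf : forall i, c i ^+ 2 = \sum_j sqmod (f i j 0) by move=> i; rewrite -hnorm vnorm_sq.
have hcol : forall j, \sum_i sqmod (f i j 0) = lam.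
  move=> j.
  have hin_e : in_Hn real (delta_mx j 0 : 'cV[R[i]]_n).
    by move=> _ l; rewrite /delta_mx mxE; case: (_ && _).
  have hv : vnorm (delta_mx j 0 : 'cV[R[i]]_n) ^+ 2 = 1.
    rewrite vnorm_sq (bigD1 j) //= big1 => [|l hl']; last by rewrite /delta_mx mxE (negbTE hl') /sqmod /= expr0n /= addr0.
    by rewrite /delta_mx mxE !eqxx /sqmod /= expr0n expr1n /= !addr0.
  have hcd : forall i, cdot (delta_mx j 0) (f i) = conjc (f i j 0).
    move=> i; rewrite /cdot (bigD1 j) //= big1 => [|l hl']; last by rewrite /delta_mx mxE (negbTE hl') mul0r.
    by rewrite /delta_mx mxE !eqxx mul1r addr0.
  have := hid _ hin_e; rewrite hv mulr1 => <-.
  by apply: eq_bigr => i _; rewrite hcd sqmod_conj.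
have hT : \sum_i c i ^+ 2 = n%:R * lam.
  under eq_bigr do rewrite hcf.
  rewrite exchange_big /=; under eq_bigr do rewrite hcol.
  by rewrite sumr_const card_ord mulr_natl.
rewrite hT; split; first by rewrite mulr_gt0 // ltr0n.
move=> l; rewrite ler_pM2l ?ltr0n //.
have := hid _ (hin l); rewrite hnorm.
rewrite (bigD1 l) //= /cdot.
have -> : \sum_j f l j 0 * conjc (f l j 0) = (c l ^+ 2)%:C.
  rewrite hcf rmorph_sum; apply: eq_bigr => j _; exact: mul_conj.
rewrite sqmodC => h.
have h2 : 0 <= \sum_(i < K | i != l) sqmod (\sum_j f l j 0 * conjc (f i j 0)).
  by apply: sumr_ge0 => i _; apply: sqmod_ge0.
have h3 : 0 <= c l ^+ 2 by apply: sqr_ge0.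
nra.
Qed.
End NL.
Section SL.
Variable R : realType.

Lemma Q n K (v : 'I_K -> 'cV[R]_n) (lam : R) (X : 'I_n -> R) :
 (forall j l, \sum_(i<K) v i j 0 * v i l 0 = lam * (j == l)%:R) ->
 \sum_(i<K) (\sum_j X j * v i j 0) ^+ 2 = lam * \sum_j X j ^+ 2.
Proof.
move=> h.
transitivity (\sum_(i<K) \sum_j \sum_l (X j * X l) * (v i j 0 * v i l 0)).
  apply: eq_bigr => i _; rewrite expr2 big_distrlr /=.
  by apply: eq_bigr => j _; apply: eq_bigr => l _; ring.
rewrite exchange_big /=.
transitivity (\sum_j \sum_l (X j * X l) * (lam * (j == l)%:R)).
  apply: eq_bigr => j _; rewrite exchange_big /=; apply: eq_bigr => l _.
  by rewrite -mulr_sumr h.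
rewrite mulr_sumr; apply: eq_bigr => j _; rewrite (bigD1 j) //= big1 => [|l hl]; last first.
  by rewrite eq_sym (negbTE hl) !mulr0.
by rewrite eqxx /= mulr1 addr0; ring.
Qed.

Lemma SL (real : bool) n K (c : 'I_K -> R) : (forall i, 0 <= c i) -> (0 < n)%N ->
  0 < \sum_i c i ^+ 2 -> (forall i, n%:R * c i ^+ 2 <= \sum_i c i ^+ 2) ->
  tight_frame_set real n c.
Proof.
move=> hc hn hT hle.
set T := \sum_i c i ^+ 2 in hT hle *.
set lam := T / n%:R.
have hnr : 0 < n%:R :> R by rewrite ltr0n.
set s := [seq c i ^+ 2 | i <- enum 'I_K].
have [G [hm [hg1 hg2]]] : exists G : seq (R * 'cV[R]_n), map fst G = s /\ good n lam G.
  apply: (@CL _ (size s)) => //.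
  - by rewrite /lam divr_ge0 // ltW.
  - move=> w /mapP [i _ ->]; rewrite sqr_ge0 /= /lam ler_pdivlMr // mulrC; exact: hle.
  - by rewrite big_map big_enum /= /lam mulrC divfK // gt_eqF.
have hsz : size G = K by rewrite -(size_map fst) hm size_map size_enum_ord.
pose v (i : 'I_K) := (nth (0, 0) G i).2.
have hnth : forall i : 'I_K, (nth (0,0) G i).1 = c i ^+ 2.
  move=> i; rewrite -(nth_map _ 0) ?hsz // hm (nth_map i) ?size_enum_ord //.
  by rewrite nth_ord_enum.
have hv : forall i, sqn (v i) = c i ^+ 2.
  by move=> i; rewrite -hnth; apply: hg1; apply: mem_nth; rewrite hsz.
have hframe : forall j l, \sum_(i<K) v i j 0 * v i l 0 = lam * (j == l)%:R.
  by move=> j l; rewrite -hg2 (big_nth (0,0)) hsz big_mkord.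
split => //.
exists (fun i => map_mx (fun r => r%:C) (v i)).
split; last first.
  move=> i; rewrite /vnorm; under eq_bigr do rewrite mxE sqmodC.
  by rewrite -/(sqn (v i)) hv sqrtr_sqr ger0_norm.
split.
  by move=> i _ j; rewrite mxE.
exists lam; split; first by rewrite /lam divr_gt0.
move=> x _.
have hcd : forall i, sqmod (cdot x (map_mx (fun r => r%:C) (v i))) =
    (\sum_j complex.Re (x j 0) * v i j 0) ^+ 2 + (\sum_j complex.Im (x j 0) * v i j 0) ^+ 2.
  move=> i; rewrite /sqmod /cdot Re_sum Im_sum; congr (_ ^+ 2 + _ ^+ 2); apply: eq_bigr => j _.
    by rewrite mxE conjc_real ReMr.
  by rewrite mxE conjc_real ImMr.
under eq_bigr do rewrite hcd.
by rewrite big_split /= !(Q _ hframe) vnorm_sq -mulrDr -big_split.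
Qed.
End SL.
Lemma cons0 (R : Type) k (c : R) (a : 'I_k -> R) : cons_seq c a ord0 = c.
Proof. by rewrite /cons_seq unlift_none. Qed.
Lemma consS (R : Type) k (c : R) (a : 'I_k -> R) i : cons_seq c a (lift ord0 i) = a i.
Proof. by rewrite /cons_seq liftK. Qed.

Close Scope complex_scope.
Unset Implicit Arguments.
Set Strict Implicit.

Theorem theorem4p2 (R : realType) (real : bool) (n k : nat) (a1 : R)
    (a : 'I_k -> R) (b : R) :
  (2 <= n)%N ->
  tight_frame_set real n (cons_seq a1 a) ->
  0 <= b ->
  (tight_frame_set real n (cons_seq b a) <->
   (n%:R * (\big[Num.max/0]_(i < k) a i ^+ 2) - \sum_(i < k) a i ^+ 2 <= b ^+ 2
    /\ b ^+ 2 <= (\sum_(i < k) a i ^+ 2) / (n.-1)%:R)).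
Proof.
move=> hn H hb.
have hn0 : (0 < n)%N by apply: leq_trans hn.
set S := \sum_(i < k) a i ^+ 2.
set m := \big[Num.max/0]_(i < k) a i ^+ 2.
have hsum : forall c, \sum_i cons_seq c a i ^+ 2 = c ^+ 2 + S.
  by move=> c; rewrite big_ord_recl cons0; under eq_bigr do rewrite consS.
have [hT1 hle1] := NL hn0 H; rewrite hsum in hT1 hle1.
have ha : forall i, 0 <= a i by move=> i; rewrite -(consS a1 a); apply: H.1.
have hnr : n%:R = (n.-1)%:R + 1 :> R by rewrite -[in LHS](prednK hn0) -addn1 natrD.
have hn1 : 1 <= (n.-1)%:R :> R by rewrite ler1n -ltnS prednK.
have hn1p : 0 < (n.-1)%:R :> R by lra.
have hS : 0 < S.
  have := hle1 ord0; rewrite cons0 hnr => h.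
  have h0 : 0 <= a1 ^+ 2 by apply: sqr_ge0.
  nra.
have hm_le : forall i, a i ^+ 2 <= m.
  by move=> i; rewrite /m (bigD1 i) //= le_max lexx.
have hm_ub : forall B, 0 <= B -> (forall i, a i ^+ 2 <= B) -> m <= B.
  move=> B hB h; rewrite /m; apply: (big_ind (fun x => x <= B)) => //.
  by move=> x y hx hy; rewrite ge_max hx hy.
split.
- move=> H2; have [hT2 hle2] := NL hn0 H2; rewrite hsum in hT2 hle2.
  split.
    have hnp : 0 < n%:R :> R by rewrite ltr0n.
    have hmB : m <= (b ^+ 2 + S) / n%:R.
      apply: hm_ub; first by rewrite divr_ge0 // ?ltW.
      by move=> i; rewrite ler_pdivlMr // mulrC -(consS b a); apply: hle2.
    move: hmB; rewrite ler_pdivlMr // => h; lra.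
  rewrite ler_pdivlMr //.
  have := hle2 ord0; rewrite cons0 hnr; lra.
- move=> [hlow hup]; apply: SL => //.
  + by move=> i; case: (unliftP ord0 i) => [j|] ->; [rewrite consS|rewrite cons0].
  + rewrite hsum; have : 0 <= b ^+ 2 by apply: sqr_ge0. lra.
  + rewrite hsum => i; case: (unliftP ord0 i) => [j|] ->.
      rewrite consS; have := hm_le j => hj.
      have hnp : 0 <= n%:R :> R by rewrite ler0n.
      have : n%:R * a j ^+ 2 <= n%:R * m by rewrite ler_wpM2l.
      lra.
    rewrite cons0; move: hup; rewrite ler_pdivlMr // hnr; lra.
Qed.
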